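(* For every $\theta\in\Theta$ and every mass vector $W=[w_1,\dots,w_n]$ (i.e. $w_i\ge 0$, $\sum_{i=1}^n w_i=1$), with induced distribution $\tilde{\mathbb P}_n=\sum_{i=1}^n w_i\delta_{\xi_i}$, every minimizer $\tilde\lambda_*(\theta)$ of $\lambda\mapsto \lambda\sigma^p+\tilde H(\theta,\lambda)$ over $\lambda\ge 0$ satisfies $$\tilde\lambda_*(\theta)\le \tau(\theta):=\mathtt C(\theta)\left(2^{p-1}+\frac{1+2^{p-1}\rho^p}{\sigma^p}\right),$$ where $\rho=\max_{i\in[n]}\mathtt d(\xi_i,\xi_0)$.
   Context: Setting: $\Xi=\mathbb X\times\mathbb Y$ with $\mathbb X\subseteq\mathbb R^m$, $\mathbb Y\subseteq\mathbb R$, equipped with the metric $\mathtt d((x,y),(x',y'))=\|x-x'\|+\frac{\gamma}{2}|y-y'|$ for a norm $\|\cdot\|$ on $\mathbb R^m$ and $\gamma>0$; $(\Xi,\mathtt d)$ is assumed complete. Fix $p\ge1$, $\sigma>0$, data points $\xi_1,\dots,\xi_n\in\Xi$, $[n]=\{1,\dots,n\}$. A loss $\ell:\mathbb R^d\times\Xi\to[0,\infty)$ and a feasible set $\Theta\subseteq\mathbb R^d$ are given. Assumption: $\ell(\theta,\cdot)$ is continuous for every $\theta\in\Theta$, and there exist a positive continuous function $\mathtt C(\theta)$ and a point $\xi_0\in\Xi$ with $\ell(\theta,\xi)\le \mathtt C(\theta)(1+\mathtt d^p(\xi,\xi_0))$ for all $\theta\in\Theta,\xi\in\Xi$. Define the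 Moreau–Yosida regularization $h(\theta,\lambda,\xi)=\sup_{\zeta\in\Xi}\{\ell(\theta,\zeta)-\lambda\mathtt d^p(\zeta,\xi)\}$, $h_i(\theta,\lambda)=h(\theta,\lambda,\xi_i)$, and for a mass vector $W$, $\tilde H(\theta,\lambda)=\sum_{i=1}^n w_ih_i(\theta,\lambda)$. *)

(* Defs.v *)
From mathcomp Require Import all_boot all_order all_algebra.
From mathcomp Require Import all_classical all_reals all_analysis.
Import Order.TTheory GRing.Theory Num.Theory.
Import numFieldNormedType.Exports.
Local Open Scope ring_scope.
Local Open Scope classical_set_scope.

Set Implicit Arguments.
Unset Strict Implicit.
Unset Printing Implicit Defensive.

Definition is_norm (R : realType) (m : nat) (nrm : 'rV[R]_m -> R) : Prop :=
  [/\ (forall x, nrm x = 0 -> x = 0),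
      (forall (a : R) x, nrm (a *: x) = `|a| * nrm x) &
      (forall x y, nrm (x + y) <= nrm x + nrm y)].

Definition Xi (R : realType) (m : nat) (X : set 'rV[R]_m) (Y : set R)
  : set ('rV[R]_m * R) := [set u | X u.1 /\ Y u.2].

Definition dist (R : realType) (m : nat) (nrm : 'rV[R]_m -> R) (gamma : R)
  (u v : 'rV[R]_m * R) : R :=
  nrm (u.1 - v.1) + gamma / 2 * `|u.2 - v.2|.

Definition complete_in (R : realType) (T : Type) (dd : T -> T -> R) (S : set T) : Prop :=
  forall u : nat -> T, (forall k, S (u k)) ->
    (forall e : R, 0 < e -> exists N, forall k l, (N <= k)%N -> (N <= l)%N ->
        dd (u k) (u l) < e) ->
    exists z, S z /\ (forall e : R, 0 < e -> exists N, forall k, (N <= k)%N ->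
        dd (u k) z < e).

Definition continuous_on_metric (R : realType) (T : Type) (dd : T -> T -> R)
  (S : set T) (f : T -> R) : Prop :=
  forall z, S z -> forall e : R, 0 < e -> exists2 delta : R, 0 < delta &
    forall z', S z' -> dd z' z < delta -> `|f z' - f z| < e.

Definition moreau_yosida (R : realType) (Th T : Type) (ell : Th -> T -> R)
  (dd : T -> T -> R) (S : set T) (p : R) (theta : Th) (lam : R) (xi : T) : \bar R :=
  ereal_sup [set ((ell theta z - lam * (dd z xi) `^ p)%:E)%E | z in S].

Definition Htilde (R : realType) (Th T : Type) (ell : Th -> T -> R)
  (dd : T -> T -> R) (S : set T) (p : R) (n : nat) (w : 'I_n -> R)
  (xs : 'I_n -> T) (theta : Th) (lam : R) : \bar R :=
  (\sum_(i < n) (w i)%:E * moreau_yosida ell dd S p theta lam (xs i))%E.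

(* Main.v *)
Require Import Defs.
From mathcomp Require Import all_boot all_order all_algebra.
From mathcomp Require Import all_classical all_reals all_analysis.
From mathcomp Require Import ring lra.
Import Order.TTheory GRing.Theory Num.Theory.
Import numFieldNormedType.Exports.
Local Open Scope ring_scope.
Local Open Scope classical_set_scope.


Section Helpers.
Variable R : realType.

Lemma pow_half_le (p a b : R) : 1 <= p -> 0 <= a -> 0 <= b ->
  (a + b) `^ p <= 2 `^ (p - 1) * (a `^ p + b `^ p).
Proof.
move=> p1 a0 b0.
have p0 : 0 < p by apply: lt_le_trans p1.
have h : (2^-1 * a + 2^-1 * b) `^ p <= 2^-1 * a `^ p + 2^-1 * b `^ p.
  rewrite {2 4}(_ : 2^-1 = 1 - 2^-1); last by rewrite {2}(splitr 1) div1r addrK.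
  by apply: (convex_powR p1 (Itv01 _ _)) => //=;
    rewrite ?inE/= ?in_itv/= ?andbT // ?invr_ge0// invf_le1 ?ler1n.
have e1 : a + b = 2 * (2^-1 * a + 2^-1 * b) by field.
rewrite e1 powRM // ?addr_ge0 ?mulr_ge0 ?invr_ge0 //.
have e2 : 2 `^ (p - 1) = 2 `^ p / 2.
  by rewrite powRB ?powRr1 //; apply/implyP => _; rewrite pnatr_eq0.
rewrite e2.
have h2 : 0 <= 2 `^ p :> R by apply: powR_ge0.
apply: (le_trans (ler_wpM2l h2 h)).
by rewrite le_eqVlt; apply/orP; left; apply/eqP; field.
Qed.

End Helpers.

Theorem lemma1 (R : realType) (m d n : nat)
  (X : set 'rV[R]_m) (Y : set R) (nrm : 'rV[R]_m -> R) (gamma : R)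
  (p sigma : R) (xs : 'I_n -> 'rV[R]_m * R)
  (ell : 'rV[R]_d -> 'rV[R]_m * R -> R) (Theta : set 'rV[R]_d)
  (C : 'rV[R]_d -> R) (xi0 : 'rV[R]_m * R) :
  is_norm nrm -> 0 < gamma ->
  complete_in (dist nrm gamma) (Xi X Y) ->
  1 <= p -> 0 < sigma ->
  (forall i, Xi X Y (xs i)) ->
  (forall th z, Xi X Y z -> 0 <= ell th z) ->
  (forall th, Theta th -> continuous_on_metric (dist nrm gamma) (Xi X Y) (ell th)) ->
  (forall th, 0 < C th) -> continuous C ->
  Xi X Y xi0 ->
  (forall th z, Theta th -> Xi X Y z ->
     ell th z <= C th * (1 + (dist nrm gamma z xi0) `^ p)) ->
  forall (theta : 'rV[R]_d) (w : 'I_n -> R),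
  Theta theta ->
  (forall i, 0 <= w i) -> \sum_(i < n) w i = 1 ->
  forall lam_star : R,
  0 <= lam_star ->
  (forall lam : R, 0 <= lam ->
     ((lam_star * sigma `^ p)%:E
        + Htilde ell (dist nrm gamma) (Xi X Y) p w xs theta lam_star <=
      (lam * sigma `^ p)%:E
        + Htilde ell (dist nrm gamma) (Xi X Y) p w xs theta lam)%E) ->
  let rho := \big[Order.max/0]_(i < n) dist nrm gamma (xs i) xi0 in
  lam_star <= C theta * (2 `^ (p - 1) + (1 + 2 `^ (p - 1) * rho `^ p) / sigma `^ p).
Proof.
move=> [nrm0' nrmZ nrmD] g0 _ p1 s0 xsS ell0 _ C0 _ xi0S ellC theta w thT w0 w1 ls ls0 opt /=.
set rho := \big[Num.max/0]_(i < n) _.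
set dd := dist nrm gamma.
have p0 : 0 < p by apply: lt_le_trans p1.
have pn0 : p != 0 by rewrite gt_eqF.
have nrm0 : nrm 0 = 0.
  by have := nrmZ 0 0; rewrite scale0r normr0 mul0r.
have nrmN x : nrm (- x) = nrm x.
  by rewrite -scaleN1r nrmZ normrN normr1 mul1r.
have nrm_ge0 x : 0 <= nrm x.
  have := nrmD x (- x); rewrite subrr nrm0 nrmN => h.
  by rewrite -(@pmulr_rge0 _ 2) // mulr2n mulrDl mul1r.
have dd_ge0 a b : 0 <= dd a b.
  by rewrite /dd /dist addr_ge0 // mulr_ge0 // divr_ge0 // ltW.
have dd_self a : dd a a = 0.
  by rewrite /dd /dist !subrr nrm0 normr0 mulr0 addr0.
have dd_tri a b c : dd a c <= dd a b + dd b c.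
  rewrite /dd /dist.
  have h1 : nrm (a.1 - c.1) <= nrm (a.1 - b.1) + nrm (b.1 - c.1).
    by have := nrmD (a.1 - b.1) (b.1 - c.1); rewrite addrA subrK.
  have h2 : `|a.2 - c.2| <= `|a.2 - b.2| + `|b.2 - c.2|.
    by have := ler_normD (a.2 - b.2) (b.2 - c.2); rewrite addrA subrK.
  have g2 : 0 <= gamma / 2 by rewrite divr_ge0 // ltW.
  have := ler_wpM2l g2 h2; lra.
have dd_sym a b : dd a b = dd b a.
  by rewrite /dd /dist -nrmN opprB -normrN opprB.
have powle a b : 0 <= a -> a <= b -> a `^ p <= b `^ p.
  move=> a0 ab; apply: ge0_ler_powR => //; first exact: ltW.
  by rewrite nnegrE (le_trans a0 ab).
set K := C theta * (1 + 2 `^ (p - 1) * rho `^ p).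
set lam0 := C theta * 2 `^ (p - 1).
have rho_ge (i : 'I_n) : dd (xs i) xi0 <= rho by exact: le_bigmax.
have MY_ge0 lam i : (0 <= moreau_yosida ell dd (Xi X Y) p theta lam (xs i))%E.
  apply: ereal_sup_ge; exists (ell theta (xs i) - lam * (dd (xs i) (xs i)) `^ p)%:E.
    by exists (xs i).
  by rewrite dd_self powR0 // mulr0 subr0 lee_fin ell0.
have MY_le i : (moreau_yosida ell dd (Xi X Y) p theta lam0 (xs i) <= K%:E)%E.
  apply: ge_ereal_sup => _ [z zS <-]; rewrite lee_fin.
  have h1 := ellC theta z thT zS.
  have h2 : dd z xi0 `^ p <= 2 `^ (p - 1) * (dd z (xs i) `^ p + dd (xs i) xi0 `^ p).
    apply: le_trans (@pow_half_le _ p _ _ p1 (dd_ge0 z (xs i)) (dd_ge0 (xs i) xi0)).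
    by apply: powle => //; apply: dd_tri.
  have h3 : dd (xs i) xi0 `^ p <= rho `^ p by apply: powle.
  have c0 := ltW (C0 theta).
  have t0 : 0 <= 2 `^ (p - 1) :> R by apply: powR_ge0.
  have h4 := ler_wpM2l c0 h2.
  have h5 := ler_wpM2l (mulr_ge0 c0 t0) h3.
  rewrite /K /lam0.
  set A := dd z (xs i) `^ p in h2 h4 *.
  set B := dd (xs i) xi0 `^ p in h2 h3 h4 h5.
  set D := dd z xi0 `^ p in h1 h2 h4.
  set T := 2 `^ (p - 1) in t0 h2 h4 h5 *.
  set c := C theta in c0 h1 h4 h5 *.
  nra.
have Hls : (0 <= Htilde ell dd (Xi X Y) p w xs theta ls)%E.
  by apply: sume_ge0 => i _; apply: mule_ge0; [rewrite lee_fin|apply: MY_ge0].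
have Hl0 : (Htilde ell dd (Xi X Y) p w xs theta lam0 <= K%:E)%E.
  rewrite /Htilde.
  apply: (@le_trans _ _ (\sum_(i < n) (w i * K)%:E)%E).
    apply: lee_sum => i _; rewrite EFinM; apply: lee_wpmul2l; first by rewrite lee_fin.
    exact: MY_le.
  by rewrite sumEFin -big_distrl /= w1 mul1r.
have lam00 : 0 <= lam0 by rewrite mulr_ge0 ?powR_ge0 // ltW.
have H := opt lam0 lam00.
have : ((ls * sigma `^ p)%:E <= (lam0 * sigma `^ p)%:E + K%:E)%E.
  apply: le_trans (leeDl _ Hls) _; apply: le_trans H _; exact: leeD2l.
rewrite -EFinD lee_fin => Hf.
have sp : 0 < sigma `^ p by apply: powR_gt0.
have -> : C theta * (2 `^ (p - 1) + (1 + 2 `^ (p - 1) * rho `^ p) / sigma `^ p)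
   = (lam0 * sigma `^ p + K) / sigma `^ p.
  by rewrite /lam0 /K; field; rewrite gt_eqF.
by rewrite ler_pdivlMr.
Qed.
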